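(* Let $S$ be a set of Boolean relations such that (i) every relation in $S$ is bijunctive, (ii) $S$ contains a relation which is not $\mathsf{F}$-valid, (iii) $S$ contains a relation which is not $\mathsf{T}$-valid, and (iv) $[x \neq y] \in Rep_{NC}(S)$. Then one of the following holds: (a) $Rep_{NC}(S)$ contains all bijunctive relations; (b) $S \subseteq Rep_{NC}(\{[x],[x\neq y]\})$.
   Context: $\mathbb{B} = \{\mathsf{F},\mathsf{T}\}$; $[\varphi]$ is the relation of tuples satisfying $\varphi$; $[x] = \{\mathsf{T}\}$. A relation is bijunctive if it is $[\varphi]$ for a conjunction $\varphi$ of clauses with at most 2 literals; $i$-valid if $(i,\dots,i)\in R$. For a set $S$ of relations, $Rep_{NC}(S)$ is the set of relations $[\theta]$ for $\theta$ of the form $(\exists \vec x)\bigwedge_{i<n} R_i(\vec x,\vec y)$ with $R_i\in S$ (existentially quantified finite conjunctions of atoms from $S$, without constants). *)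

(* Defs.v *)
From Stdlib Require Import List.
From mathcomp Require Import all_boot.
Set Implicit Arguments. Unset Strict Implicit. Unset Printing Implicit Defensive.

(* A Boolean relation: an arity n together with a set of n-tuples over B = bool
   (false = F, true = T). *)
Definition brel := {n : nat & {set n.-tuple bool}}.
Definition arity (R : brel) : nat := projT1 R.
Definition tuples (R : brel) : {set (arity R).-tuple bool} := projT2 R.
Definition mkrel (n : nat) (A : {set n.-tuple bool}) : brel := existT _ n A.

(* A literal: a variable index with a polarity; x_i is satisfied by t iff
   t_i = b.  A clause is a disjunction of literals; a formula a conjunction of
   clauses. *)
Definition lit_sat n (t : n.-tuple bool) (l : 'I_n * bool) : bool := tnth t l.1 == l.2.
Definition cnf_sat n (t : n.-tuple bool) (cs : seq (seq ('I_n * bool))) : bool :=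
  all (fun c => has (lit_sat t) c) cs.

Definition bijunctive (R : brel) : Prop :=
  exists cs : seq (seq ('I_(arity R) * bool)),
    all (fun c => size c <= 2) cs /\
    tuples R = [set t | cnf_sat t cs].

Definition valid (i : bool) (R : brel) : Prop :=
  [tuple i | _ < arity R] \in tuples R.

(* An atom R(z_1,...,z_a) of a formula with free variables y_1..y_m and
   existentially quantified variables x_1..x_k: each argument is a variable
   (inl j = y_j, inr j = x_j); no constants. *)
Record atom (m k : nat) : Type := Atom {
  at_rel : brel;
  at_args : 'I_(arity at_rel) -> 'I_m + 'I_k }.

Definition atom_sat m k (a : atom m k) (v : 'I_m + 'I_k -> bool) : bool :=
  [tuple v (@at_args m k a i) | i < arity (at_rel a)] \in tuples (at_rel a).

Definition RepNC (S : brel -> Prop) (R : brel) : Prop :=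
  exists (k : nat) (atoms : seq (atom (arity R) k)),
    (forall a, List.In a atoms -> S (at_rel a)) /\
    forall y : (arity R).-tuple bool,
      y \in tuples R <->
      exists x : 'I_k -> bool,
        forall a, List.In a atoms ->
          atom_sat a (fun z => match z with inl j => tnth y j | inr j => x j end).

Definition rel_x : brel := @mkrel 1 [set t | tnth t ord0].
Definition rel_neq : brel :=
  @mkrel 2 [set t | tnth t ord0 != tnth t (lift ord0 ord0)].

(* Main.v *)
Require Import Defs.
From mathcomp Require Import all_boot.
From Stdlib Require Import Classical FunctionalExtensionality.
Set Implicit Arguments. Unset Strict Implicit. Unset Printing Implicit Defensive.

Definition env n k (y : 'I_n -> bool) (x : 'I_k -> bool) : 'I_n + 'I_k -> bool :=
  fun z => match z with inl j => y j | inr j => x j end.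

Definition Expr (S : brel -> Prop) n (P : ('I_n -> bool) -> Prop) :=
  exists k (atoms : seq (atom n k)), (forall a, List.In a atoms -> S (at_rel a)) /\
    forall y, P y <-> exists x : 'I_k -> bool, forall a, List.In a atoms -> atom_sat a (env y x).
Arguments Expr : clear implicits.

Definition relab m k m' k' (s : 'I_m + 'I_k -> 'I_m' + 'I_k') (a : atom m k) : atom m' k' :=
  @Atom m' k' (at_rel a) (fun i => s (@at_args _ _ a i)).

Lemma sat_relab m k m' k' (s : 'I_m + 'I_k -> 'I_m' + 'I_k') a v :
  atom_sat (relab s a) v = atom_sat a (fun z => v (s z)).
Proof. by []. Qed.

Lemma sat_eq m k (a : atom m k) v w : (forall z, v z = w z) -> atom_sat a v -> atom_sat a w.
Proof.
move=> H; rewrite /atom_sat; suff -> : [tuple v (@at_args _ _ a i) | i < arity (at_rel a)] =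
  [tuple w (@at_args _ _ a i) | i < arity (at_rel a)] by [].
by apply: eq_mktuple => i; apply: H.
Qed.

Definition join n k (y : 'I_n -> bool) (x : 'I_k -> bool) : 'I_(n + k) -> bool :=
  fun i => match split i with inl a => y a | inr b => x b end.

Lemma join_l n k y x (a : 'I_n) : @join n k y x (lshift k a) = y a.
Proof. by rewrite /join (unsplitK (inl a : 'I_n + 'I_k)). Qed.
Lemma join_r n k y x (b : 'I_k) : @join n k y x (rshift n b) = x b.
Proof. by rewrite /join (unsplitK (inr b : 'I_n + 'I_k)). Qed.

Definition sl n k1 k2 (z : 'I_n + 'I_k1) : 'I_n + 'I_(k1 + k2) :=
  match z with inl j => inl j | inr c => inr (lshift k2 c) end.
Definition sr n k1 k2 (z : 'I_n + 'I_k2) : 'I_n + 'I_(k1 + k2) :=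
  match z with inl j => inl j | inr c => inr (rshift k1 c) end.
Definition sx n k k' (z : 'I_(n + k) + 'I_k') : 'I_n + 'I_(k + k') :=
  match z with
  | inl i => match split i with inl a => inl a | inr b => inr (lshift k' b) end
  | inr c => inr (rshift k c) end.
Definition sg m n k (g : 'I_m -> 'I_n) (z : 'I_m + 'I_k) : 'I_n + 'I_k :=
  match z with inl j => inl (g j) | inr c => inr c end.

Lemma E_ext S n P Q : Expr S n P -> (forall y, P y <-> Q y) -> Expr S n Q.
Proof.
move=> [k [A [HS H]]] E; exists k, A; split => // y; rewrite -E; exact: H.
Qed.

Lemma E_true S n : Expr S n (fun _ => True).
Proof.
exists 0, [::]; split => // y; split => // _; by exists (fun _ => false).
Qed.

Lemma E_atom S n Q (f : 'I_(arity Q) -> 'I_n) : S Q ->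
  Expr S n (fun y => [tuple y (f i) | i < arity Q] \in tuples Q).
Proof.
move=> HQ; exists 0, [:: @Atom n 0 Q (fun i => inl (f i))]; split.
  by move=> a [<-|[]].
move=> y; split.
  by move=> H; exists (fun _ => false) => a [<-|[]].
by move=> [x Hx]; exact: (Hx _ (or_introl erefl)).
Qed.

Lemma E_and S n P1 P2 : Expr S n P1 -> Expr S n P2 -> Expr S n (fun y => P1 y /\ P2 y).
Proof.
move=> [k1 [A1 [HS1 H1]]] [k2 [A2 [HS2 H2]]].
exists (k1 + k2), (List.map (relab (@sl n k1 k2)) A1 ++ List.map (relab (@sr n k1 k2)) A2); split.
  move=> a /List.in_app_iff [] /List.in_map_iff [b [<- Hb]]; [exact: HS1 | exact: HS2].
move=> y; rewrite H1 H2; split.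
  move=> [[x1 Hx1] [x2 Hx2]].
  exists (join x1 x2).
  move=> a /List.in_app_iff [] /List.in_map_iff [b [<- Hb]]; rewrite sat_relab.
    by apply: sat_eq (Hx1 b Hb); case=> [j|c] //=; rewrite join_l.
  by apply: sat_eq (Hx2 b Hb); case=> [j|c] //=; rewrite join_r.
move=> [x Hx]; split.
  exists (fun c => x (lshift k2 c)) => b Hb.
  have := Hx _ (List.in_or_app _ _ _ (or_introl (List.in_map (relab (@sl n k1 k2)) _ _ Hb))).
  by rewrite sat_relab; apply: sat_eq; case.
exists (fun c => x (rshift k1 c)) => b Hb.
have := Hx _ (List.in_or_app _ _ _ (or_intror (List.in_map (relab (@sr n k1 k2)) _ _ Hb))).
by rewrite sat_relab; apply: sat_eq; case.
Qed.

Lemma E_ex S n k P : Expr S (n + k) P -> Expr S n (fun y => exists x : 'I_k -> bool, P (join y x)).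
Proof.
move=> [k' [A [HS H]]].
exists (k + k'), (List.map (relab (@sx n k k')) A); split.
  by move=> a /List.in_map_iff [b [<- Hb]]; exact: HS.
move=> y; split.
  move=> [x /H [x' Hx']]; exists (join x x') => a /List.in_map_iff [b [<- Hb]].
  rewrite sat_relab; apply: sat_eq (Hx' b Hb).
  case=> [i|c] /=; last by rewrite join_r.
  rewrite /sx /join; case: (split i) => [a0|a0] //=.
  by rewrite (unsplitK (inl a0 : 'I_k + 'I_k')).
move=> [xx Hxx]; exists (fun b => xx (lshift k' b)); apply/H.
exists (fun c => xx (rshift k c)) => b Hb.
have := Hxx _ (List.in_map (relab (@sx n k k')) _ _ Hb).
rewrite sat_relab; apply: sat_eq; case=> [i|c] //=.
by rewrite /sx /join; case: (split i).
Qed.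

Lemma E_ren S m n P (g : 'I_m -> 'I_n) : Expr S m P -> Expr S n (fun y => P (fun i => y (g i))).
Proof.
move=> [k [A [HS H]]].
exists k, (List.map (relab (@sg m n k g)) A); split.
  by move=> a /List.in_map_iff [b [<- Hb]]; exact: HS.
move=> y; rewrite H; split.
  move=> [x Hx]; exists x => a /List.in_map_iff [b [<- Hb]].
  by rewrite sat_relab; apply: sat_eq (Hx b Hb); case.
move=> [x Hx]; exists x => b Hb.
have := Hx _ (List.in_map (relab (@sg m n k g)) _ _ Hb).
by rewrite sat_relab; apply: sat_eq; case.
Qed.

Lemma E_all_list S n (I : Type) (s : list I) (P : I -> ('I_n -> bool) -> Prop) :
  (forall i, List.In i s -> Expr S n (P i)) ->
  Expr S n (fun y => forall i, List.In i s -> P i y).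
Proof.
elim: s => [|a s IH] H.
  by apply: E_ext (@E_true S n) _ => y; split.
apply: E_ext (E_and (H a (or_introl erefl)) (IH (fun i Hi => H i (or_intror Hi)))) _.
move=> y; split.
  by move=> [Ha Hs] i [<-|Hi] //; apply: Hs.
by move=> Hy; split; [apply: Hy; left | move=> i Hi; apply: Hy; right].
Qed.

Lemma In_mem (T : eqType) (x : T) (s : seq T) : List.In x s <-> x \in s.
Proof.
elim: s => [|a s IH] /=; first by rewrite in_nil.
rewrite in_cons; split.
  by case=> [->|H]; [rewrite eqxx | apply/orP; right; apply/IH].
by case/orP => [/eqP->|/IH H]; [left|right].
Qed.

Lemma E_all S n (I : finType) (P : I -> ('I_n -> bool) -> Prop) :
  (forall i, Expr S n (P i)) -> Expr S n (fun y => forall i, P i y).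
Proof.
move=> H; apply: E_ext (@E_all_list S n I (enum I) P (fun i _ => H i)) _.
move=> y; split => Hy i; last by move=> _; apply: Hy.
by apply: Hy; apply/In_mem; rewrite mem_enum.
Qed.

Lemma RepNC_of_Expr S R :
  Expr S (arity R) (fun y => [tuple y i | i < arity R] \in tuples R) -> RepNC S R.
Proof.
move=> [k [A [HS H]]]; exists k, A; split => // y.
have := H (tnth y).
have -> : [tuple tnth y i | i < arity R] = y by apply: eq_from_tnth => i; rewrite tnth_mktuple.
by [].
Qed.

Lemma Expr_of_RepNC S R :
  RepNC S R -> Expr S (arity R) (fun y => [tuple y i | i < arity R] \in tuples R).
Proof.
move=> [k [A [HS H]]]; exists k, A; split => // y.
rewrite H; split => -[x Hx]; exists x => a Ha; apply: sat_eq (Hx a Ha);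
  by case=> [j|c] //=; rewrite tnth_mktuple.
Qed.

Notation o0 := (@ord0 1).
Notation o1 := (@lift 2 ord0 ord0).

Section Neq.
Variable S : brel -> Prop.
Hypothesis Hneq : RepNC S rel_neq.

Lemma NEQ2 : Expr S 2 (fun w => w o0 != w o1).
Proof.
apply: E_ext (Expr_of_RepNC Hneq) _ => y.
by rewrite /tuples /= inE !tnth_mktuple.
Qed.

Lemma E_ren2 (F : bool -> bool -> Prop) :
  Expr S 2 (fun w => F (w o0) (w o1)) -> forall n (a b : 'I_n), Expr S n (fun y => F (y a) (y b)).
Proof.
move=> H n a b.
apply: E_ext (E_ren (fun z : 'I_2 => if val z == 0 then a else b) H) _ => y /=.
by [].
Qed.

Lemma NEQn n (a b : 'I_n) : Expr S n (fun y => y a != y b).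
Proof. exact: (@E_ren2 (fun u v => u != v) NEQ2 n a b). Qed.

Lemma EQ2 : Expr S 2 (fun w => w o0 = w o1).
Proof.
apply: E_ext (E_ex (k:=1) (E_and (NEQn (lshift 1 o0) (rshift 2 ord0))
                                 (NEQn (rshift 2 ord0) (lshift 1 o1)))) _.
move=> y /=; split.
  move=> [x]; rewrite !join_l !join_r => -[]; by case: (y o0); case: (y o1); case: (x ord0).
move=> E; exists (fun _ => ~~ y o0); rewrite !join_l !join_r E.
by case: (y o1).
Qed.

Lemma LITEQ n (a i : 'I_n) c : Expr S n (fun y => y a = (y i == c)).
Proof.
case: c.
  apply: E_ext (@E_ren2 (fun u v => u = v) EQ2 n a i) _ => y.
  by case: (y a); case: (y i).
apply: E_ext (NEQn a i) _ => y.
by case: (y a); case: (y i).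
Qed.

Lemma E_lit2 (Q : bool -> bool -> Prop) : Expr S 2 (fun w => Q (w o0) (w o1)) ->
  forall n (i j : 'I_n) b1 b2, Expr S n (fun y => Q (y i == b1) (y j == b2)).
Proof.
move=> HQ n i j b1 b2.
apply: E_ext (E_ex (k:=2) (E_and (LITEQ (rshift n o0) (lshift 2 i) b1)
   (E_and (LITEQ (rshift n o1) (lshift 2 j) b2)
          (@E_ren2 Q HQ _ (rshift n o0) (rshift n o1))))) _.
move=> y /=; split.
  by move=> [x]; rewrite !join_l !join_r => -[-> [->]].
move=> HQy; exists (fun z : 'I_2 => if val z == 0 then y i == b1 else y j == b2).
by rewrite !join_l !join_r /=.
Qed.

Lemma E_false n : Expr S n (fun _ => False).
Proof.
apply: E_ext (E_ex (k:=1) (NEQn (rshift n ord0) (rshift n ord0))) _ => y.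
by split => [[x]|[]]; rewrite eqxx.
Qed.

End Neq.

Definition T0 : brel -> Prop := fun Q => Q = rel_x \/ Q = rel_neq.

Lemma HneqT : RepNC T0 rel_neq.
Proof.
apply: RepNC_of_Expr.
exact: (@E_atom T0 2 rel_neq (fun i => i) (or_intror erefl)).
Qed.

Lemma X2 : Expr T0 2 (fun w => w o0).
Proof.
apply: E_ext (@E_atom T0 2 rel_x (fun _ => o0) (or_introl erefl)) _ => y.
by rewrite /tuples /= inE tnth_mktuple.
Qed.

Lemma UNIT n (i : 'I_n) b : Expr T0 n (fun y => y i = b).
Proof.
apply: E_ext (@E_lit2 T0 HneqT (fun u v => u) X2 n i i b b) _ => y.
by split => [/eqP|->].
Qed.

Lemma XORc n (i j : 'I_n) b1 b2 : Expr T0 n (fun y => (y i == b1) != (y j == b2)).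
Proof. exact: (@E_lit2 T0 HneqT (fun u v => u != v) (NEQ2 HneqT) n i j b1 b2). Qed.

Definition U (R : brel) (i : 'I_(arity R)) b := forall r, r \in tuples R -> tnth r i = b.
Definition Xc (R : brel) (i j : 'I_(arity R)) b1 b2 :=
  forall r, r \in tuples R -> (tnth r i == b1) != (tnth r j == b2).
Definition SupF R (y : 'I_(arity R) -> bool) :=
  (forall i b, U i b -> y i = b) /\
  (forall i j b1 b2, Xc i j b1 b2 -> (y i == b1) != (y j == b2)).
Arguments SupF : clear implicits.

Lemma Expr_SupF R : Expr T0 (arity R) (SupF R).
Proof.
apply: E_and.
  apply: (@E_all _ _ _ (fun i y => forall b, U i b -> y i = b)) => i.
  apply: (@E_all _ _ _ (fun b y => U i b -> y i = b)) => b.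
  case: (classic (U i b)) => h.
    by apply: E_ext (UNIT i b) _ => y; split => [H _|H]; [exact: H|exact: H h].
  by apply: E_ext (@E_true _ _) _ => y; split.
apply: (@E_all _ _ _ (fun i y => forall j b1 b2, Xc i j b1 b2 -> (y i == b1) != (y j == b2))) => i.
apply: (@E_all _ _ _ (fun j y => forall b1 b2, Xc i j b1 b2 -> (y i == b1) != (y j == b2))) => j.
apply: (@E_all _ _ _ (fun b1 y => forall b2, Xc i j b1 b2 -> (y i == b1) != (y j == b2))) => b1.
apply: (@E_all _ _ _ (fun b2 y => Xc i j b1 b2 -> (y i == b1) != (y j == b2))) => b2.
case: (classic (Xc i j b1 b2)) => h.
  by apply: E_ext (XORc i j b1 b2) _ => y; split => [H _|H]; [exact: H|exact: H h].
by apply: E_ext (@E_true _ _) _ => y; split.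
Qed.

Lemma tnth_mk n (y : 'I_n -> bool) : tnth [tuple y i | i < n] = y.
Proof. by apply: functional_extensionality => i; rewrite tnth_mktuple. Qed.

Lemma caseA R : (forall t, SupF R (tnth t) -> t \in tuples R) -> RepNC T0 R.
Proof.
move=> Hs; apply: RepNC_of_Expr; apply: E_ext (Expr_SupF R) _ => y; split.
  by move=> H; apply: Hs; rewrite tnth_mk.
move=> Hin; split.
  by move=> i b Hu; rewrite -(Hu _ Hin) tnth_mktuple.
by move=> i j b1 b2 Hx; have := Hx _ Hin; rewrite !tnth_mktuple.
Qed.

Lemma caseE R : (forall t, t \notin tuples R) -> RepNC T0 R.
Proof.
move=> H; apply: RepNC_of_Expr; apply: E_ext (E_false HneqT _) _ => y.
by split => // Hin; move: (H [tuple y i | i < arity R]); rewrite Hin.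
Qed.

Lemma tuple_tnth n (r : n.-tuple bool) : [tuple tnth r i | i < n] = r.
Proof. by apply: eq_from_tnth => i; rewrite tnth_mktuple. Qed.

Lemma tuple_join n k (y : 'I_n -> bool) (x : 'I_k -> bool) :
  [tuple join y x (rshift n a) | a < k] = [tuple x a | a < k].
Proof. by apply: eq_mktuple => a; rewrite join_r. Qed.

Lemma caseB S R (HS : S R) (Hb : bijunctive R) (Hneq : RepNC S rel_neq)
  r0 (Hr0 : r0 \in tuples R) t (Ht : SupF R (tnth t)) (Hn : t \notin tuples R) :
  Expr S 2 (fun w => w o0 || w o1).
Proof.
case: Hb => cs [Hsz Hcs].
have Hall : forall c, c \in cs -> forall r, r \in tuples R -> has (lit_sat r) c.
  by move=> c Hc r; rewrite Hcs inE => /allP; apply.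
move: Hn; rewrite Hcs inE => /allPn [c Hc Hnc].
have := allP Hsz c Hc; move: (Hall c Hc) => {}Hall.
case: Ht => [HU HX].
case: c Hc Hnc Hall => [|[i b1] [|[j b2] [|? ?]]] Hc Hnc Hall //= _.
- by have := Hall _ Hr0.
- have Hu : U i b1 by move=> r Hr; move: (Hall r Hr); rewrite /lit_sat /= orbF => /eqP.
  by move: Hnc; rewrite /lit_sat /= (HU _ _ Hu) eqxx.
move: Hnc; rewrite /lit_sat /= orbF negb_or => /andP [Hti Htj].
have Hall2 : forall r, r \in tuples R -> (tnth r i == b1) || (tnth r j == b2).
  by move=> r Hr; move: (Hall r Hr); rewrite /lit_sat /= orbF.
have [r1 [H1 H1']] : exists r, r \in tuples R /\ tnth r i != b1.
  apply: NNPP => N; move: Hti; rewrite (HU i b1) ?eqxx // => r Hr.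
  by case: (tnth r i =P b1) => // ne; exfalso; apply: N; exists r; split => //; apply/eqP.
have [r2 [H2 H2']] : exists r, r \in tuples R /\ tnth r j != b2.
  apply: NNPP => N; move: Htj; rewrite (HU j b2) ?eqxx // => r Hr.
  by case: (tnth r j =P b2) => // ne; exfalso; apply: N; exists r; split => //; apply/eqP.
have [r3 [H3 H3']] : exists r, r \in tuples R /\ (tnth r i == b1) && (tnth r j == b2).
  apply: NNPP => N.
  have Hx : Xc i j b1 b2.
    move=> r Hr; have := Hall2 r Hr.
    case E1: (tnth r i == b1); case E2: (tnth r j == b2) => //= _.
    by exfalso; apply: N; exists r; rewrite E1 E2.
  by move: (HX _ _ _ _ Hx); rewrite (negbTE Hti) (negbTE Htj).
apply: E_ext (E_ex (k:=arity R) (E_and (@E_atom S (2 + arity R) R (fun a => rshift 2 a) HS)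
   (E_and (LITEQ Hneq (lshift (arity R) o0) (rshift 2 i) b1)
          (LITEQ Hneq (lshift (arity R) o1) (rshift 2 j) b2)))) _.
move=> y /=; split.
  move=> [x]; rewrite tuple_join !join_l !join_r => -[Hin [-> ->]].
  by move: (Hall2 _ Hin); rewrite !tnth_mktuple.
have Hsuff : forall r, r \in tuples R -> y o0 = (tnth r i == b1) -> y o1 = (tnth r j == b2) ->
  exists x : 'I_(arity R) -> bool,
   [tuple join y x (rshift 2 a) | a < arity R] \in tuples R /\
   join y x (lshift (arity R) o0) = (join y x (rshift 2 i) == b1) /\
   join y x (lshift (arity R) o1) = (join y x (rshift 2 j) == b2).
  move=> r Hr E0 E1; exists (tnth r); rewrite tuple_join tuple_tnth !join_l !join_r.
  by split.
case E0: (y o0); case E1: (y o1) => //= _.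
- case/andP: H3' => H3a H3b.
  by apply: (Hsuff r3) => //; rewrite ?E0 ?E1 ?H3a ?H3b.
- have H2a : tnth r2 i == b1 by move: (Hall2 _ H2); rewrite (negbTE H2') orbF.
  by apply: (Hsuff r2) => //; rewrite ?E0 ?E1 ?H2a ?(negbTE H2').
- have H1a : tnth r1 j == b2 by move: (Hall2 _ H1); rewrite (negbTE H1').
  by apply: (Hsuff r1) => //; rewrite ?E0 ?E1 ?H1a ?(negbTE H1').
Qed.

Theorem mainTheorem12 (S : brel -> Prop) :
  (forall R, S R -> bijunctive R) ->
  (exists R, S R /\ ~ valid false R) ->
  (exists R, S R /\ ~ valid true R) ->
  RepNC S rel_neq ->
  (forall R, bijunctive R -> RepNC S R) \/
  (forall R, S R -> RepNC (fun Q => Q = rel_x \/ Q = rel_neq) R).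
Proof.
move=> Hbij _ _ Hneq.
case: (classic (forall R, S R -> RepNC T0 R)) => [H|H]; [by right | left].
have [R [HSR HnR]] : exists R, S R /\ ~ RepNC T0 R.
  by apply: NNPP => N; apply: H => R HR; apply: NNPP => N'; apply: N; exists R.
have HOR : Expr S 2 (fun w => w o0 || w o1).
  case: (classic (exists r, r \in tuples R)) => [[r0 Hr0]|N]; last first.
    by exfalso; apply: HnR; apply: caseE => t; apply/negP => Ht; apply: N; exists t.
  case: (classic (forall t, SupF R (tnth t) -> t \in tuples R)) => [Hs|Hs].
    by exfalso; apply: HnR; exact: caseA.
  have [t [Ht1 Ht2]] : exists t, SupF R (tnth t) /\ t \notin tuples R.
    apply: NNPP => N; apply: Hs => t Ht; apply: NNPP => N'; apply: N; exists t; split => //.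
    by apply/negP.
  exact: (caseB HSR (Hbij R HSR) Hneq Hr0 Ht1 Ht2).
move=> Q [cs [Hsz Hcs]]; apply: RepNC_of_Expr.
apply: E_ext (@E_all_list S (arity Q) _ cs
   (fun c y => has (lit_sat [tuple y i | i < arity Q]) c) _) _.
  move=> c /In_mem Hc; have := allP Hsz c Hc.
  case: c Hc => [|[i b1] [|[j b2] [|? ?]]] Hc //= _.
  - by apply: E_ext (E_false Hneq _) _ => y; split.
  - apply: E_ext (@E_lit2 S Hneq (fun u v => u || v) HOR _ i i b1 b1) _ => y.
    by rewrite /lit_sat /= tnth_mktuple orbF orbb.
  - apply: E_ext (@E_lit2 S Hneq (fun u v => u || v) HOR _ i j b1 b2) _ => y.
    by rewrite /lit_sat /= !tnth_mktuple orbF.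
move=> y; rewrite Hcs inE /cnf_sat; split => [Hy | Hy c Hc].
  by apply/allP => c Hc; apply: Hy; apply/In_mem.
by apply: (allP Hy c); apply/In_mem.
Qed.
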